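(* Let $G=(V,E)$ be a finite, simple, connected reflective graph and $x\sim y$. Then $V_x^y$ is convex, and the subgraph induced on $V_x^y$ is reflective.
   Context: $d$ is the combinatorial distance. For adjacent $x\sim y$ let $V_x^y=\{v: d(v,x)<d(v,y)\}$, $V^{xy}=\{v:d(v,x)=d(v,y)\}$. A reflection from $x$ to $y$ is a graph automorphism $\phi$ with $\phi\circ\phi=\mathrm{id}$, $\phi(x)=y$, such that the edges between $V_x^y$ and $V_y^x$ are exactly $\{\{x',\phi(x')\}:x'\in V_x^y\}$ and $\phi$ fixes $V^{xy}$ pointwise. A graph is reflective if every edge admits a reflection. A set $W\subseteq V$ is convex if every shortest path in $G$ whose first and last vertices lie in $W$ has all its vertices in $W$. *)

(* Defs.v *)
From mathcomp Require Import all_boot.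
Set Implicit Arguments. Unset Strict Implicit. Unset Printing Implicit Defensive.

Section Graphs.
Variable T : finType.
Variable e : rel T.

Definition simple_graph : Prop := symmetric e /\ irreflexive e.
Definition connected_graph : Prop := forall u v : T, connect e u v.

Definition walkn (n : nat) (u v : T) : bool :=
  [exists p : n.-tuple T, path e u p && (last u p == v)].

(* combinatorial distance: least n with a walk of length n from u to v
   (for unreachable v it equals #|T|, irrelevant for connected graphs) *)
Definition dist (u v : T) : nat := find (fun n => walkn n u v) (iota 0 #|T|).

Definition Vside (x y : T) : {set T} := [set v | dist v x < dist v y].
Definition Vmid (x y : T) : {set T} := [set v | dist v x == dist v y].

Definition automorphism (phi : T -> T) : Prop :=
  bijective phi /\ forall a b, e (phi a) (phi b) = e a b.

Definition reflection (x y : T) (phi : T -> T) : Prop :=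
  [/\ automorphism phi,
      (forall v, phi (phi v) = v),
      phi x = y,
      (* edges between V_x^y and V_y^x are exactly the pairs {x', phi x'}, x' in V_x^y *)
      (forall a b, [&& a \in Vside x y, b \in Vside y x & e a b]
                   = (a \in Vside x y) && (b == phi a))
    & (forall v, v \in Vmid x y -> phi v = v)].

Definition reflective : Prop :=
  forall x y, e x y -> exists phi : T -> T, reflection x y phi.

(* shortest paths: walks x :: p from u to v with size p = dist u v *)
Definition convex (W : {set T}) : Prop :=
  forall (u : T) (p : seq T),
    path e u p -> size p = dist u (last u p) ->
    u \in W -> last u p \in W -> all (fun w => w \in W) (u :: p).

End Graphs.

Definition induced {T : finType} (e : rel T) (W : {set T}) : rel {v : T | v \in W} :=
  fun a b => e (val a) (val b).
Arguments induced {T} e W _ _.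

(* Main.v *)
Require Import Defs.
From mathcomp Require Import all_boot.
Set Implicit Arguments. Unset Strict Implicit. Unset Printing Implicit Defensive.
Section Gen.
Variable T : finType.
Variable e : rel T.

Lemma walknP n u v :
  reflect (exists p : seq T, [/\ size p = n, path e u p & last u p = v]) (walkn e n u v).
Proof.
apply: (iffP existsP).
  by case=> p /andP[pp /eqP lp]; exists (val p); rewrite size_tuple.
by case=> p [<- pp lp]; exists (in_tuple p); rewrite /= pp lp eqxx.
Qed.

Lemma dist_le n u v : walkn e n u v -> dist e u v <= n.
Proof.
move=> W; rewrite /dist.
case: (ltnP n #|T|) => hn.
  rewrite leqNgt; apply/negP => h; have := before_find 0 h.
  by rewrite nth_iota // add0n W.
by apply: leq_trans (find_size _ _) _; rewrite size_iota.
Qed.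

Lemma walk_dist u v p : path e u p -> last u p = v -> walkn e (dist e u v) u v.
Proof.
move=> pp lp.
have [p' [sp' pp' lp']] : exists p', [/\ size p' < #|T|, path e u p' & last u p' = v].
  case/shortenP: pp lp => p' pp' up' _ <-; exists p'; split => //.
  by move/card_uniqP: up' => /= <-; apply: max_card.
have W : walkn e (size p') u v by apply/walknP; exists p'.
rewrite /dist.
have H : has (fun n => walkn e n u v) (iota 0 #|T|).
  by apply/hasP; exists (size p'); rewrite ?mem_iota.
have := nth_find 0 H; rewrite nth_iota ?add0n //.
by move: H; rewrite has_find size_iota.
Qed.

Lemma walk_dist_seq u v p : path e u p -> last u p = v ->
  exists q, [/\ size q = dist e u v, path e u q & last u q = v].
Proof. by move=> pp lp; apply/walknP; apply: walk_dist pp lp. Qed.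

Lemma dist_path_le u p : path e u p -> dist e u (last u p) <= size p.
Proof. by move=> pp; apply: dist_le; apply/walknP; exists p. Qed.

Hypothesis conn : connected_graph e.

Lemma dist_walk u v : exists q, [/\ size q = dist e u v, path e u q & last u q = v].
Proof. by case/connectP: (conn u v) => p pp lp; apply: walk_dist_seq pp (esym lp). Qed.

Lemma dist_tri u v w : dist e u w <= dist e u v + dist e v w.
Proof.
case: (dist_walk u v) => p [sp pp lp]; case: (dist_walk v w) => q [sq pq lq].
rewrite -sp -sq -size_cat; apply: dist_le; apply/walknP; exists (p ++ q).
by rewrite cat_path pp lp pq last_cat lp lq.
Qed.

Lemma dist_edge u v : e u v -> dist e u v <= 1.
Proof. by move=> h; apply: dist_le; apply/walknP; exists [:: v]; rewrite /= h. Qed.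

Lemma dist_tri_edge u u' v : e u u' -> dist e u v <= (dist e u' v).+1.
Proof. by move=> h; apply: leq_trans (dist_tri u u' v) _; rewrite -add1n leq_add2r dist_edge. Qed.

Lemma dist0 u : dist e u u = 0.
Proof. by apply/eqP; rewrite -leqn0; apply: dist_le; apply/walknP; exists [::]. Qed.

Lemma dist_le1 u v : dist e u v <= 1 -> u = v \/ e u v.
Proof.
case: (dist_walk u v) => [[|a [|b q]]] [<- /= pp lp] // _; first by left.
by right; rewrite -lp; case/andP: pp.
Qed.

Lemma dist_eq0 u v : dist e u v = 0 -> u = v.
Proof. by move=> h; case: (dist_walk u v) => -[|a q] [sq pq lq] //; rewrite h in sq. Qed.

Lemma dist_step u v k : dist e u v = k.+1 -> exists u', e u u' /\ dist e u' v = k.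
Proof.
case: (dist_walk u v) => [[|a q]] [sq pq lq] hk; first by rewrite -sq in hk.
case/andP: pq => eua pq; exists a; split => //.
apply/eqP; rewrite eqn_leq; apply/andP; split.
  by rewrite -lq; apply: leq_trans (dist_path_le pq) _; rewrite -ltnS -hk -sq.
by rewrite -ltnS -hk dist_tri_edge.
Qed.

End Gen.
Section Inv.
Variable T : finType.
Variable e : rel T.
Hypothesis conn : connected_graph e.

Lemma path_hom (f : T -> T) (hf : forall a b, e (f a) (f b) = e a b) a q :
  path e (f a) (map f q) = path e a q.
Proof. by elim: q a => //= b q IH a; rewrite hf IH. Qed.

Lemma dist_hom_le (f : T -> T) (hf : forall a b, e (f a) (f b) = e a b) a b :
  dist e (f a) (f b) <= dist e a b.
Proof.
case: (dist_walk conn a b) => q [sq pq lq].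
rewrite -sq -(size_map f); apply: dist_le; apply/walknP; exists (map f q).
by rewrite path_hom // last_map lq.
Qed.

Lemma dist_inv (f : T -> T) (hf : forall a b, e (f a) (f b) = e a b)
  (fK : forall a, f (f a) = a) a b : dist e (f a) (f b) = dist e a b.
Proof.
apply/eqP; rewrite eqn_leq dist_hom_le //=.
by rewrite -{1}(fK a) -{1}(fK b) dist_hom_le.
Qed.
End Inv.

Section Main.
Variable T : finType.
Variable e : rel T.
Hypothesis sym : symmetric e.
Hypothesis irr : irreflexive e.
Hypothesis conn : connected_graph e.
Hypothesis refl : reflective e.
Variables (x y : T) (phi : T -> T).
Hypothesis exy : e x y.
Hypothesis R : reflection e x y phi.

Notation A := (Vside e x y).
Notation B := (Vside e y x).
Notation M := (Vmid e x y).
Notation d := (dist e).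

Lemma phiK v : phi (phi v) = v. Proof. by case: R. Qed.
Lemma phi_hom a b : e (phi a) (phi b) = e a b. Proof. by case: R => -[]. Qed.
Lemma phix : phi x = y. Proof. by case: R. Qed.
Lemma phiy : phi y = x. Proof. by rewrite -phix phiK. Qed.
Lemma phid a b : d (phi a) (phi b) = d a b.
Proof. exact: (@dist_inv T e conn phi phi_hom phiK a b). Qed.

Lemma R1 v : v \in A -> (phi v \in B) && e v (phi v).
Proof.
case: R => _ _ _ H _ vA; have := H v (phi v).
by rewrite vA eqxx /= => ->.
Qed.

Lemma R2 a b : a \in A -> b \in B -> e a b -> b = phi a.
Proof.
case: R => _ _ _ H _ aA bB eab; have := H a b.
by rewrite aA bB eab /= => /esym/eqP.
Qed.

Lemma R3 m : m \in M -> phi m = m.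
Proof. by case: R => _ _ _ _ H /H. Qed.

Lemma AB v : v \in A -> v \in B -> False.
Proof. by rewrite !inE => h1 h2; have := ltn_trans h1 h2; rewrite ltnn. Qed.

Lemma trich z : [\/ z \in A, z \in M | z \in B].
Proof. rewrite !inE; case: ltngtP => h; by [constructor 1 | constructor 3 | constructor 2]. Qed.

Lemma K u z : u \in A -> d z u < d z (phi u) -> z \in A.
Proof.
move=> uA; move Hk: (d z u) => k; elim: k z Hk => [|k IH] z Hk hlt.
  by rewrite (dist_eq0 conn Hk).
case: (dist_step conn Hk) => z' [ezz' dz'].
have z'A : z' \in A.
  apply: IH dz' _; rewrite -ltnS; apply: leq_trans hlt _; exact: dist_tri_edge.
case: (trich z) => // [zM|zB].
  have h : d z (phi u) = d z u by rewrite -{1}(R3 zM) phid.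
  by move: hlt; rewrite h Hk ltnn.
have zz : z = phi z' by apply: R2 => //; rewrite sym.
move: hlt; rewrite zz phid dz' => h.
by have := ltn_trans (ltnSn k) h; rewrite ltnn.
Qed.

Lemma far a b : a \in A -> b \in A -> e a b -> d (phi a) a < d (phi a) b.
Proof.
move=> aA bA eab; case/andP: (R1 aA) => paB epa.
apply: (@leq_trans 2); first by rewrite ltnS dist_edge // sym.
rewrite ltnNge; apply/negP => /(dist_le1 conn) [pab|epb].
  by apply: (@AB b) => //; rewrite -pab.
have := R2 bA paB; rewrite sym => /(_ epb) /(congr1 phi); rewrite !phiK => ab.
by move: eab; rewrite ab irr.
Qed.

Lemma rho_swap a b rho : a \in A -> b \in A -> e a b -> reflection e a b rho ->
  rho (phi a) = phi b.
Proof.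
move=> aA bA eab [_ _ _ H _]; have := H (phi a) (phi b).
have h1 : phi a \in Vside e a b by rewrite inE far.
have h2 : phi b \in Vside e b a by rewrite inE far // sym.
have h3 : e (phi a) (phi b) by rewrite phi_hom.
by rewrite h1 h2 h3 /= => /esym/eqP.
Qed.

Lemma reflK a b rho : reflection e a b rho -> forall v, rho (rho v) = v.
Proof. by case. Qed.
Lemma refl_hom a b rho : reflection e a b rho -> forall u v, e (rho u) (rho v) = e u v.
Proof. by case=> -[]. Qed.
Lemma refld a b rho : reflection e a b rho -> forall u v, d (rho u) (rho v) = d u v.
Proof. by move=> h; apply: (@dist_inv T e conn rho (refl_hom h) (reflK h)). Qed.
Lemma reflab a b rho : reflection e a b rho -> rho a = b.
Proof. by case. Qed.

Definition S u := [set z | d z u < d z (phi u)].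

Lemma Kc u : u \in A -> #|S u| = #|A|.
Proof.
move Hk: (d u x) => k; elim: k u Hk => [|k IH] u Hk uA.
  by rewrite (dist_eq0 conn Hk) /S phix.
case: (dist_step conn Hk) => u' [euu' du'].
have u'A : u' \in A.
  move: uA; rewrite !inE Hk du' => h; rewrite -ltnS; apply: leq_trans h _.
  exact: dist_tri_edge.
have eu'u : e u' u by rewrite sym.
case: (refl eu'u) => rho Rr.
have r1 : rho u' = u := reflab Rr.
have r2 : rho (phi u') = phi u := rho_swap u'A uA eu'u Rr.
have -> : S u = rho @^-1: S u'.
  have r1' : u' = rho u by rewrite -r1 (reflK Rr).
  have r2' : phi u' = rho (phi u) by rewrite -r2 (reflK Rr).
  by apply/setP => z; rewrite !inE r2' r1' !(refld Rr).
rewrite card_preimset ?IH //; exact: can_inj (reflK Rr).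
Qed.

Lemma C u v : u \in A -> v \in A -> d v u < d v (phi u).
Proof.
move=> uA vA.
have sub : S u \subset A by apply/subsetP => z; rewrite inE; apply: K.
have : S u == A by rewrite eqEcard sub (Kc uA) leqnn.
by move/eqP => SA; move: vA; rewrite -SA inE.
Qed.

Lemma convexA : convex e A.
Proof.
move=> u p pp sp uA vA; apply/allP => w hw; apply/negPn/negP => wA.
move: pp sp vA; case/splitPl: hw => p1 p2 lw.
rewrite size_cat cat_path last_cat lw => /andP[pp1 pp2] sp vA.
have h1 : d u w <= size p1 by rewrite -lw; apply: dist_path_le.
have h2 : d w (last w p2) <= size p2 by apply: dist_path_le.
move: (last w p2) h2 sp vA => v' h2 sp vA.
have h3 : d w (phi v') <= d w v'.
  by rewrite leqNgt; apply/negP => h; move/negP: wA; apply; apply: K vA h.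
have := C vA uA; rewrite ltnNge => /negP; apply.
apply: leq_trans (dist_tri conn u w (phi v')) _; rewrite -sp.
by apply: leq_add => //; apply: leq_trans h3 h2.
Qed.

Lemma rhoA a b rho : a \in A -> b \in A -> e a b -> reflection e a b rho ->
  forall z, z \in A -> rho z \in A.
Proof.
move=> aA bA eab Rr z zA; apply: (K bA).
rewrite -(rho_swap aA bA eab Rr) -(reflab Rr) !(refld Rr).
exact: C.
Qed.

Local Notation ST := {v : T | v \in A}.
Local Notation ei := (induced e A).

Lemma path_val (s : ST) q : path ei s q = path e (val s) (map val q).
Proof. by elim: q s => //= t q IH s; rewrite IH. Qed.

Lemma lift (dflt s0 : ST) q : all (fun w => w \in A) q -> path e (val s0) q ->
  path ei s0 (map (insubd dflt) q) && (val (last s0 (map (insubd dflt) q)) == last (val s0) q).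
Proof.
elim: q s0 => [|b q IH] s0 /=; first by rewrite eqxx.
case/andP => bA qA /andP[eb pq].
have vb : val (insubd dflt b) = b by rewrite insubdK.
rewrite {1}/induced vb eb /=; by have := IH (insubd dflt b) qA; rewrite vb; apply.
Qed.

Lemma DI (s t : ST) : dist ei s t = d (val s) (val t).
Proof.
case: (dist_walk conn (val s) (val t)) => q [sq pq lq].
have qA : all (fun w => w \in A) (val s :: q).
  apply: (convexA pq); [by rewrite lq | exact: valP | by rewrite lq; exact: valP].
case/andP: qA => _ qA.
case/andP: (lift s qA pq) => pl /eqP ll.
have lt : last s (map (insubd s) q) = t by apply: val_inj; rewrite ll lq.
have le1 : dist ei s t <= d (val s) (val t).
  by rewrite -sq -(size_map (insubd s)); apply: dist_le; apply/walknP; exists (map (insubd s) q).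
have W := walk_dist pl lt.
case/walknP: W => q' [sq' pq' lq'].
apply/eqP; rewrite eqn_leq le1 /= -sq' -(size_map val).
rewrite -lq' -last_map; apply: dist_path_le; by rewrite -path_val.
Qed.

Lemma reflective_ind : reflective ei.
Proof.
move=> a b eab; case: (refl eab) => rho Rr.
have hA := rhoA (valP a) (valP b) eab Rr.
pose psi (s : ST) : ST := exist _ (rho (val s)) (hA _ (valP s)).
have psiK : cancel psi psi by move=> s; apply: val_inj; exact: (reflK Rr).
exists psi; split.
- split; first by exists psi.
  by move=> s t; rewrite /induced /=; exact: (refl_hom Rr).
- exact: psiK.
- by apply: val_inj; exact: (reflab Rr).
- move=> s t; rewrite !inE !DI -(inj_eq val_inj) /= /induced.
  case: Rr => _ _ _ H _; have := H (val s) (val t); rewrite !inE; exact.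
- move=> s; rewrite inE !DI => h; apply: val_inj => /=.
  by case: Rr => _ _ _ _ H; apply: H; rewrite inE.
Qed.

End Main.

Unset Implicit Arguments.

Theorem lemma2p9 (T : finType) (e : rel T) :
  simple_graph e -> connected_graph e -> reflective e ->
  forall x y : T, e x y ->
    convex e (Vside e x y) /\ reflective (induced e (Vside e x y)).
Proof.
move=> [sym irr] conn refl x y exy; case: (refl x y exy) => phi R.
split; first exact: (convexA sym irr conn refl R).
exact: (reflective_ind sym irr conn refl R).
Qed.
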